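(* Let $p,q$ be distinct atoms and $\varphi := \Box(p\land q)\to[\ddagger(p\land q)](\Box p\lor\Box q)$. Then $\varphi$ is true at every world of every model under the uniform semantics $\models_u$, but there is an $\mathsf{S5}$ model (relation an equivalence relation) and a world $w$ in it at which $\varphi$ is false under the dependent semantics $\models_d$. Consequently the logic of valid formulas under $\models_u$ differs from that under $\models_d$, and this remains so when both are restricted to the class of $\mathsf{S5}$ models.
   Context: Fix a countable non-empty set $\mathit{At}$ of atoms. Formulas are built from $\top$, atoms, $\lnot$, $\land$, $\Box$ and, for each propositional $\pi$, the operator $[\ddagger\pi]$. A model is $\mathcal{M}=\langle W,R,V\rangle$, $W\neq\varnothing$, $R\subseteq W\times W$, $V:\mathit{At}\to\mathcal{P}(W)$; both satisfaction relations $\models_u,\models_d$ interpret atoms, Booleans and $\Box$ in the standard Kripke way. A literal is an atom or its negation; a clause is a finite set $D$ of literals read as $\bigvee D$, tautological if it contains $p$ and $\lnot p$ for some $p$. For propositional $\pi$, $\mathcal{C}(\pi)$ is the set of non-tautological clauses $D$ with $\models\pi\to\bigvee D$ and no $D'\subsetneq D$ with $\models\pi\to\bigvee D'$. (E.g. $\mathcal{C}(p\land q)=\{\{p\},\{q\}\}$, $\mathcal{C}(\lnot(p\land q))=\{\{\lnot p,\lnot q\}\}$.) Uniform semantics: for non-tautological clauses $D_1,D_2$, $\mathcal{M}^{(D_1,D_2)}_u=\langle W',R',V'\rangle$ has $W'=W\times\{0,1,2\}$, $(w,i)R'(v,j)$ iff $wRv$, $(w,0)\in V'(p)$ iff $w\in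 V(p)$, and for $i\in\{1,2\}$: $(w,i)\in V'(p)$ iff $\lnot p\in D_i$, or $\{p,\lnot p\}\cap D_i=\varnothing$ and $w\in V(p)$. $\mathcal{M},w\models_u[\ddagger\pi]\psi$ iff for all $D_1\in\mathcal{C}(\pi)$, $D_2\in\mathcal{C}(\lnot\pi)$, $\mathcal{M}^{(D_1,D_2)}_u,(w,0)\models_u\psi$. Dependent semantics: for functions $f_1:W\to\mathcal{C}(\pi)$, $f_2:W\to\mathcal{C}(\lnot\pi)$, $\mathcal{M}^{(f_1,f_2)}_d=\langle W'',R'',V''\rangle$ has $W''=W\times\{0,1,2\}$, $(w,i)R''(v,j)$ iff $wRv$, $(w,0)\in V''(p)$ iff $w\in V(p)$, and for $i\in\{1,2\}$: $(w,i)\in V''(p)$ iff $\lnot p\in f_i(w)$, or $\{p,\lnot p\}\cap f_i(w)=\varnothing$ and $w\in V(p)$. $\mathcal{M},w\models_d[\ddagger\pi]\psi$ iff for all $f_1:W\to\mathcal{C}(\pi)$ and all $f_2:W\to\mathcal{C}(\lnot\pi)$, $\mathcal{M}^{(f_1,f_2)}_d,(w,0)\models_d\psi$. *)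

(* Defs.v *)
From HB Require Import structures.
From mathcomp Require Import all_boot.
From mathcomp Require Import finmap.
Set Implicit Arguments. Unset Strict Implicit. Unset Printing Implicit Defensive.
Local Open Scope fset_scope.

Section Syntax.
Variable At : countType.

Inductive pform : Type :=
| PTop : pform
| PAtom : At -> pform
| PNeg : pform -> pform
| PAnd : pform -> pform -> pform.

Inductive form : Type :=
| FTop : form
| FAtom : At -> form
| FNeg : form -> form
| FAnd : form -> form -> form
| FBox : form -> form
| FUpd : pform -> form -> form.

Definition FOr (a b : form) : form := FNeg (FAnd (FNeg a) (FNeg b)).
Definition FImp (a b : form) : form := FNeg (FAnd a (FNeg b)).

Fixpoint peval (v : At -> bool) (pi : pform) : bool :=
  match pi with
  | PTop => true
  | PAtom a => v a
  | PNeg x => ~~ peval v x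
  | PAnd x y => peval v x && peval v y
  end.

(* literals: (a, true) is the atom a, (a, false) is its negation ~a;
   clauses: finite sets of literals, read disjunctively *)
Definition clause := {fset (At * bool)}.

Definition lit_val (v : At -> bool) (l : At * bool) : bool :=
  if l.2 then v l.1 else ~~ v l.1.

Definition tautological (D : clause) : Prop :=
  exists a : At, (a, true) \in D /\ (a, false) \in D.

Definition entails_clause (pi : pform) (D : clause) : Prop :=
  forall v : At -> bool, peval v pi -> exists2 l, l \in D & lit_val v l.

Definition Cset (pi : pform) (D : clause) : Prop :=
  ~ tautological D /\ entails_clause pi D /\
  ~ (exists D' : clause, D' `<=` D /\ D' != D /\ entails_clause pi D').

Record model : Type := Model {
  world : Type;
  inh : inhabited world;
  rel : world -> world -> Prop;
  val : At -> world -> Prop }.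
Arguments inh : clear implicits.
Arguments rel : clear implicits.
Arguments val : clear implicits.

Definition S5 (M : model) : Prop :=
  (forall w, rel M w w) /\ (forall w v, rel M w v -> rel M v w) /\
  (forall w v u, rel M w v -> rel M v u -> rel M w u).

(* valuation of a copy (w,i), i in {1,2}, determined by clause D *)
Definition upd_val (D : clause) (V : At -> Prop) (a : At) : Prop :=
  (a, false) \in D \/ ((a, true) \notin D /\ (a, false) \notin D /\ V a).

Definition triple_inh (M : model) : inhabited (world M * 'I_3) :=
  match inh M with inhabits w => inhabits (w, ord0) end.

(* the updated model, given clause assignments g1 g2 (constant in the
   uniform semantics, world-dependent in the dependent semantics) *)
Definition upd_model (M : model) (g1 g2 : world M -> clause) : model :=
  @Model (world M * 'I_3) (triple_inh M)
    (fun x y => rel M x.1 y.1)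
    (fun a x =>
       if nat_of_ord x.2 == 0%N then val M a x.1
       else if nat_of_ord x.2 == 1%N then upd_val (g1 x.1) (fun b => val M b x.1) a
       else upd_val (g2 x.1) (fun b => val M b x.1) a).

Unset Implicit Arguments.
Fixpoint sat_u (phi : form) : forall M : model, world M -> Prop :=
  match phi with
  | FTop => fun M w => True
  | FAtom a => fun M w => val M a w
  | FNeg x => fun M w => ~ sat_u x M w
  | FAnd x y => fun M w => sat_u x M w /\ sat_u y M w
  | FBox x => fun M w => forall v, rel M w v -> sat_u x M v
  | FUpd pi x => fun M w =>
      forall D1 D2 : clause, Cset pi D1 -> Cset (PNeg pi) D2 ->
        sat_u x (@upd_model M (fun _ => D1) (fun _ => D2)) (w, ord0)
  end.

Fixpoint sat_d (phi : form) : forall M : model, world M -> Prop :=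
  match phi with
  | FTop => fun M w => True
  | FAtom a => fun M w => val M a w
  | FNeg x => fun M w => ~ sat_d x M w
  | FAnd x y => fun M w => sat_d x M w /\ sat_d y M w
  | FBox x => fun M w => forall v, rel M w v -> sat_d x M v
  | FUpd pi x => fun M w =>
      forall f1 f2 : world M -> clause,
        (forall u, Cset pi (f1 u)) -> (forall u, Cset (PNeg pi) (f2 u)) ->
        sat_d x (@upd_model M f1 f2) (w, ord0)
  end.

Set Implicit Arguments.
Definition valid_u (phi : form) : Prop := forall M w, sat_u phi M w.
Definition valid_d (phi : form) : Prop := forall M w, sat_d phi M w.
Definition S5valid_u (phi : form) : Prop := forall M w, S5 M -> sat_u phi M w.
Definition S5valid_d (phi : form) : Prop := forall M w, S5 M -> sat_d phi M w.

End Syntax.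
Arguments sat_u {At} phi M w.
Arguments sat_d {At} phi M w.

Definition phi9 (At : countType) (p q : At) : form At :=
  FImp (FBox (FAnd (FAtom p) (FAtom q)))
       (FUpd (PAnd (PAtom p) (PAtom q)) (FOr (FBox (FAtom p)) (FBox (FAtom q)))).

(* Main.v *)
Require Import Defs.
From mathcomp Require Import all_boot.
From mathcomp Require Import finmap.
Local Open Scope fset_scope.

Section Aux.
Variable At : countType.

Lemma falsify (D : clause At) : ~ tautological D ->
  forall l, l \in D -> ~~ lit_val (fun a => (a, false) \in D) l.
Proof.
move=> nt [a b] lD; rewrite /lit_val /=.
case: b lD => lD //=; last by rewrite lD.
apply/negP => H; apply: nt; by exists a.
Qed.

Lemma C2_neg (p q : At) (D : clause At) :
  Cset (PNeg (PAnd (PAtom p) (PAtom q))) D -> (p, false) \in D /\ (q, false) \in D.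
Proof.
move=> [nt [e _]].
have := e (fun a => (a, false) \in D).
case Hp: ((p, false) \in D); case Hq: ((q, false) \in D) => //=; rewrite Hp Hq => /(_ isT) [l lD hl];
  by move: (@falsify D nt l lD); rewrite hl.
Qed.

Lemma C1_min (p q : At) (D : clause At) : p <> q ->
  Cset (PAnd (PAtom p) (PAtom q)) D -> (p, true) \in D -> (q, true) \in D -> False.
Proof.
move=> hpq [nt [e m]] hp hq; apply: m; exists [fset (p, true)]; split.
  by rewrite fsub1set.
split.
  apply/eqP => E; move: hq; rewrite -E inE => /eqP [] /esym; exact: hpq.
move=> v /= /andP [vp _]; exists (p, true); by rewrite ?inE.
Qed.

Lemma C1_ok (p q : At) : Cset (PAnd (PAtom p) (PAtom q)) [fset (p, true)].
Proof.
split.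
  by move=> [a [_]]; rewrite inE => /eqP [].
split.
  move=> v /= /andP [vp _]; exists (p, true); by rewrite ?inE.
move=> [D' [sub [ne e]]].
have [l lD _] := e (fun _ => true) isT.
have := fsubsetP sub _ lD; rewrite inE => /eqP El; subst l.
move/negP: ne; apply; rewrite eqEfsubset sub /=; by rewrite fsub1set.
Qed.

Lemma C2_ok (p q : At) : p <> q ->
  Cset (PNeg (PAnd (PAtom p) (PAtom q))) [fset (p, false); (q, false)].
Proof.
move=> hpq; split.
  by move=> [a [+ _]]; rewrite !inE => /orP [] /eqP [].
split.
  move=> v /=; case vp: (v p) => /=.
    move=> vq; exists (q, false); by rewrite /lit_val /= ?inE ?eqxx ?orbT.
  move=> _; exists (p, false); by rewrite /lit_val /= ?inE ?eqxx ?vp.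
move=> [D' [sub [ne e]]].
have inD: forall l, l \in D' -> l = (p, false) \/ l = (q, false).
  move=> l /(fsubsetP sub); rewrite !inE => /orP [] /eqP ->; by [left|right].
case Hp: ((p, false) \in D'); case Hq: ((q, false) \in D').
- move/negP: ne; apply; rewrite eqEfsubset sub /=.
  apply/fsubsetP => x; rewrite !inE => /orP [] /eqP ->; by rewrite ?Hp ?Hq.
- have := e (fun a => a == p); rewrite /=.
  have -> : (q == p) = false by apply/eqP => E; apply: hpq.
  rewrite eqxx => /(_ isT) [l lD].
  case: (inD l lD) => El; subst l; rewrite /lit_val /= ?eqxx //.
  by rewrite Hq in lD.
- have := e (fun a => a == q); rewrite /=.
  have -> : (p == q) = false by apply/eqP.
  rewrite /= => /(_ isT) [l lD].
  case: (inD l lD) => El; subst l; rewrite /lit_val /= ?eqxx //.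
  by rewrite Hp in lD.
- have := e (fun a => a == q); rewrite /=.
  have -> : (p == q) = false by apply/eqP.
  rewrite /= => /(_ isT) [l lD].
  case: (inD l lD) => El; subst l; by [rewrite Hp in lD | rewrite Hq in lD].
Qed.

End Aux.
Arguments C2_neg {At p q D}.
Arguments C1_min {At p q D}.
Arguments C1_ok {At}.
Arguments C2_ok {At p q}.

Theorem proposition9 (At : countType) (p q : At) (hpq : p <> q) :
  (forall (M : model At) (w : world M), sat_u (phi9 p q) M w) /\
  (exists (M : model At) (w : world M), S5 M /\ ~ sat_d (phi9 p q) M w) /\
  ~ (forall phi : form At, valid_u phi <-> valid_d phi) /\
  ~ (forall phi : form At, S5valid_u phi <-> S5valid_d phi).
Proof.
have P1 : forall (M : model At) (w : world M), sat_u (phi9 p q) M w.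
  move=> M w /= [Hbox Hn]; apply: Hn => D1 D2 C1 C2.
  have [h2p h2q] := C2_neg C2.
  have key : forall r, (p, true) \notin D1 -> r = p ->
    forall v, @Defs.rel At M w v -> forall i : 'I_3,
    (if nat_of_ord i == 0%N then @Defs.val At M r v
     else if nat_of_ord i == 1%N then upd_val D1 (fun b => @Defs.val At M b v) r
     else upd_val D2 (fun b => @Defs.val At M b v) r).
    move=> r hr -> v Hr [[|[|i]] Hi] /=.
    - by case: (Hbox v Hr).
    - rewrite /upd_val; case: (boolP ((p, false) \in D1)) => Hf; first by left.
      right; split => //; split => //; by case: (Hbox v Hr).
    - by left.
  have keyq : (q, true) \notin D1 ->
    forall v, @Defs.rel At M w v -> forall i : 'I_3,
    (if nat_of_ord i == 0%N then @Defs.val At M q v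
     else if nat_of_ord i == 1%N then upd_val D1 (fun b => @Defs.val At M b v) q
     else upd_val D2 (fun b => @Defs.val At M b v) q).
    move=> hr v Hr [[|[|i]] Hi] /=.
    - by case: (Hbox v Hr).
    - rewrite /upd_val; case: (boolP ((q, false) \in D1)) => Hf; first by left.
      right; split => //; split => //; by case: (Hbox v Hr).
    - by left.
  move=> [Np Nq].
  case Hp: ((p, true) \in D1).
    case Hq: ((q, true) \in D1).
      exact: (C1_min hpq C1 Hp Hq).
    apply: Nq => -[v i] /= Hr; apply: keyq => //; by rewrite Hq.
  apply: Np => -[v i] /= Hr; apply: (key p) => //; by rewrite Hp.
have P2 : exists (M : model At) (w : world M), S5 M /\ ~ sat_d (phi9 p q) M w.
  exists (@Model At bool (inhabits true) (fun _ _ => True) (fun _ _ => True)), true.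
  split; first by split; [|split].
  move=> /=; apply; split; first by [].
  have Cq : Cset (PAnd (PAtom p) (PAtom q)) [fset (q, true)].
    case: (C1_ok q p) => nt [e m]; split => //; split.
      move=> v /= /andP [vp vq]; apply: e; by rewrite /= vp vq.
    move=> [D' [s [n e']]]; apply: m; exists D'; split => //; split => //.
    move=> v /= /andP [vq vp]; apply: e'; by rewrite /= vp vq.
  move=> H.
  have := H (fun w => if w then [fset (p, true)] else [fset (q, true)])
             (fun _ => [fset (p, false); (q, false)])
             (fun u => if u as b return Cset (PAnd (PAtom p) (PAtom q))
                          (if b then [fset (p, true)] else [fset (q, true)])
                       then C1_ok p q else Cq)
             (fun _ => C2_ok hpq).
  apply; split.
  + move=> /(_ (true, @Ordinal 3 1 isT) I) /=; rewrite /upd_val !inE /=.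
    case=> [/eqP [] | [/negP]]; by rewrite ?eqxx.
  + move=> /(_ (false, @Ordinal 3 1 isT) I) /=; rewrite /upd_val !inE /=.
    case=> [/eqP [] | [/negP]]; by rewrite ?eqxx.
split; first exact: P1.
split; first exact: P2.
have [M [w [S H]]] := P2.
split.
  move=> /(_ (phi9 p q)) [/(_ P1) + _] => /(_ M w); exact: H.
move=> /(_ (phi9 p q)) [+ _] => E.
have : S5valid_d (phi9 p q) by apply: E => M' w' _; exact: P1.
move=> /(_ M w S); exact: H.
Qed.
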